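(* Let $V$ be a finite connected subset of $\mathbb{Z}^{2}$. Then \[ \ell_{\mathrm{TS}}(V)\le|V|\left(1+8\left(\frac{|\partial V|}{|V|}\right)^{1/3}\right). \]
   Context: $\mathbb{Z}^2$ is considered with its standard Cayley graph with respect to $e_1=(1,0)$, $e_2=(0,1)$; connectedness refers to this graph. For a finite set $V\subseteq\mathbb{Z}^2$, $\ell_{\mathrm{TS}}(V)$ is the length of a shortest path in this graph visiting every point of $V$ (starting and ending points not prescribed). $\partial V$ is the inner boundary: the set of points of $V$ having at least one neighbour outside $V$. *)

(* Defs.v *)
(* points of Z^2 as Z*Z, finite sets as duplicate-free lists. *)
From Stdlib Require Import ZArith List Reals ClassicalEpsilon.
Import ListNotations.

Definition pt := (Z * Z)%type.

Definition adj (x y : pt) : Prop :=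
  (Z.abs (fst x - fst y) + Z.abs (snd x - snd y) = 1)%Z.

Definition neighbours (x : pt) : list pt :=
  [ (fst x + 1, snd x)%Z; (fst x - 1, snd x)%Z;
    (fst x, snd x + 1)%Z; (fst x, snd x - 1)%Z ].

Definition pt_eqb (x y : pt) : bool :=
  (Z.eqb (fst x) (fst y) && Z.eqb (snd x) (snd y))%bool.

Definition memb (x : pt) (V : list pt) : bool := existsb (pt_eqb x) V.

Fixpoint is_walk (p : list pt) : Prop :=
  match p with
  | x :: ((y :: _) as q) => adj x y /\ is_walk q
  | _ => True
  end.

Definition walk_length (p : list pt) : nat := length p - 1.

Definition connected (V : list pt) : Prop :=
  forall x y, In x V -> In y V ->
    exists q, is_walk (x :: q) /\ last (x :: q) x = y /\ incl (x :: q) V.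

Definition inner_boundary (V : list pt) : list pt :=
  filter (fun x => existsb (fun y => negb (memb y V)) (neighbours x)) V.

Definition visits (p V : list pt) : Prop := incl V p.

Definition is_ell_TS (V : list pt) (n : nat) : Prop :=
  (exists p, p <> nil /\ is_walk p /\ visits p V /\ walk_length p = n) /\
  (forall p, p <> nil -> is_walk p -> visits p V -> (n <= walk_length p)%nat).

Definition ell_TS (V : list pt) : nat :=
  epsilon (inhabits 0%nat) (is_ell_TS V).

(* Main.v *)
Require Import Defs.
From Stdlib Require Import ZArith List Reals Lia Lra Classical ClassicalEpsilon.
Import ListNotations.

Lemma pt_eqb_eq x y : pt_eqb x y = true <-> x = y.
Proof.
  destruct x as [a b], y as [c d]; unfold pt_eqb; simpl.
  rewrite Bool.andb_true_iff, !Z.eqb_eq; split; [intros [-> ->]; auto | intros H; inversion H; auto].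
Qed.

Lemma memb_In x V : memb x V = true <-> In x V.
Proof.
  unfold memb; rewrite existsb_exists; split.
  - intros [y [Hy He]]; apply pt_eqb_eq in He; subst; auto.
  - intros H; exists x; split; auto; apply pt_eqb_eq; auto.
Qed.

Lemma memb_false x V : memb x V = false <-> ~ In x V.
Proof.
  rewrite <- memb_In; destruct (memb x V); split; congruence.
Qed.

Lemma adj_sym x y : adj x y -> adj y x.
Proof. unfold adj; lia. Qed.

Lemma last_app_cons {A} (l : list A) y l2 d : last (l ++ y :: l2) d = last (y :: l2) d.
Proof. induction l as [|a l IH]; simpl; auto. rewrite IH. destruct l; simpl; auto. Qed.

Lemma last_cons_in {A} (x : A) l d : In (last (x :: l) d) (x :: l).
Proof.
  revert x; induction l as [|a l IH]; intros x; simpl; auto.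
  right. specialize (IH a). simpl in IH. destruct l; auto.
Qed.

Lemma walk_app l1 l2 d : l1 <> [] -> l2 <> [] -> is_walk l1 -> is_walk l2 ->
  adj (last l1 d) (hd d l2) -> is_walk (l1 ++ l2).
Proof.
  induction l1 as [|a l1 IH]; intros H1 H2 W1 W2 Ha; [congruence|].
  destruct l1 as [|b l1].
  - destruct l2 as [|c l2]; [congruence|]. simpl in *. auto.
  - simpl in W1 |- *. destruct W1 as [Hab W1]. split; auto.
    apply IH; auto; discriminate.
Qed.

Lemma walk_glue l1 l2 d : l1 <> [] -> is_walk l1 -> is_walk (last l1 d :: l2) ->
  is_walk (l1 ++ l2).
Proof.
  induction l1 as [|a l1 IH]; intros H1 W1 W2; [congruence|].
  destruct l1 as [|b l1].
  - simpl in *. exact W2.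
  - simpl in W1 |- *. destruct W1 as [Hab W1]. split; auto.
    apply IH; auto; discriminate.
Qed.

Lemma walk_split l1 l2 : is_walk (l1 ++ l2) -> is_walk l1 /\ is_walk l2.
Proof.
  induction l1 as [|a l1 IH]; intros W; simpl in *; [split; auto; exact I|].
  destruct l1 as [|b l1].
  - simpl in W. split; [exact I|]. destruct l2; auto; tauto.
  - simpl in W. destruct W as [Hab W]. apply IH in W. simpl. tauto.
Qed.

Lemma walk_split_mid l1 y l2 : is_walk (l1 ++ y :: l2) ->
  is_walk (l1 ++ [y]) /\ is_walk (y :: l2).
Proof.
  intros W. split.
  - replace (l1 ++ y :: l2) with ((l1 ++ [y]) ++ l2) in W by (rewrite <- app_assoc; auto).
    apply walk_split in W; tauto.
  - apply walk_split in W; tauto.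
Qed.

Lemma walk_rev l : is_walk l -> is_walk (rev l).
Proof.
  induction l as [|a l IH]; intros W; simpl; [exact I|].
  destruct l as [|b l]; simpl; [exact I|].
  destruct W as [Hab W]. simpl in IH.
  apply walk_app with (d := a); auto.
  - destruct (rev l); discriminate.
  - discriminate.
  - simpl; exact I.
  - rewrite last_app_cons. simpl. apply adj_sym; auto.
Qed.
Lemma last_default {A} (x : A) l d d' : last (x :: l) d = last (x :: l) d'.
Proof. revert x; induction l as [|a l IH]; intros x; auto. simpl. change (last (a :: l) d = last (a :: l) d'). apply IH. Qed.

Lemma last_app1 {A} (l : list A) y d : last (l ++ [y]) d = y.
Proof. rewrite last_app_cons. reflexivity. Qed.

Lemma rotate C c0 x : is_walk (c0 :: C) -> last (c0 :: C) c0 = c0 -> In x (c0 :: C) ->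
  exists C', is_walk (x :: C') /\ last (x :: C') x = x /\ length C' = length C /\
   (forall p, In p (x :: C') <-> In p (c0 :: C)).
Proof.
  intros W Hl Hx.
  destruct C as [|a C].
  { destruct Hx as [->|[]]. exists []. simpl; intuition. }
  assert (HxD : In x (a :: C)).
  { destruct Hx as [H|H]; auto. subst x. rewrite <- Hl at 1. simpl.
    apply last_cons_in. }
  apply in_split in HxD. destruct HxD as [D1 [D2 HD]]. rewrite HD in *.
  exists (D2 ++ D1 ++ [x]).
  assert (Hc : last (x :: D2) x = c0).
  { rewrite <- Hl. change (c0 :: D1 ++ x :: D2) with ((c0 :: D1) ++ x :: D2).
    rewrite last_app_cons. apply last_default. }
  change (c0 :: D1 ++ x :: D2) with ((c0 :: D1) ++ x :: D2) in W.
  apply walk_split_mid in W. destruct W as [W1 W2].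
  split; [|split; [|split]].
  - change (x :: D2 ++ D1 ++ [x]) with ((x :: D2) ++ (D1 ++ [x])).
    apply walk_glue with (d := x); [discriminate|auto|]. rewrite Hc. exact W1.
  - rewrite app_assoc. change (x :: (D2 ++ D1) ++ [x]) with ((x :: D2 ++ D1) ++ [x]). apply last_app1.
  - rewrite !length_app. simpl. rewrite ?length_app. simpl. lia.
  - intros p. assert (Hc0 : In c0 (x :: D2)) by (rewrite <- Hc; apply last_cons_in).
    split; intros H; simpl in *; rewrite ?in_app_iff in *; simpl in *; intuition (subst; auto).
Qed.

Lemma splice W y U x d : is_walk W -> In y W -> is_walk (x :: U) -> last (x :: U) x = x ->
  adj y x ->
  exists W', is_walk W' /\ hd d W' = hd d W /\ last W' d = last W d /\
    length W' = length W + length U + 2 /\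
    (forall p, In p W' <-> In p W \/ In p (x :: U)).
Proof.
  intros HW Hy HU Hl Ha.
  apply in_split in Hy. destruct Hy as [A [B ->]].
  exists (A ++ y :: x :: U ++ y :: B).
  pose proof (walk_split_mid _ _ _ HW) as [W1 W2].
  split; [|split; [|split; [|split]]].
  - replace (A ++ y :: x :: U ++ y :: B) with ((A ++ [y]) ++ (x :: U ++ y :: B))
      by (rewrite <- app_assoc; reflexivity).
    apply walk_glue with (d := d); [destruct A; discriminate|exact W1|].
    rewrite last_app1.
    change (y :: x :: U ++ y :: B) with ((y :: x :: U) ++ (y :: B)).
    apply walk_app with (d := d); try discriminate.
    + simpl. split; auto.
    + exact W2.
    + simpl hd. change (last (y :: x :: U) d) with (last (x :: U) d).
      rewrite (last_default _ _ d x), Hl. apply adj_sym; auto.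
  - destruct A; reflexivity.
  - replace (A ++ y :: x :: U ++ y :: B) with ((A ++ y :: x :: U) ++ y :: B)
      by (rewrite <- app_assoc; reflexivity).
    rewrite !last_app_cons. reflexivity.
  - rewrite !length_app. simpl. rewrite length_app. simpl. lia.
  - intros p. rewrite !in_app_iff. simpl. rewrite !in_app_iff. simpl. intuition.
Qed.

Definition key (L : nat) (p : pt) : pt := (fst p / Z.of_nat L, snd p / 2)%Z.
Definition rowp (L : nat) (b : pt) (r : Z) (u : nat) : pt :=
  (Z.of_nat L * fst b + Z.of_nat u, 2 * snd b + r)%Z.
Definition bot L b := map (rowp L b 0) (seq 0 L).
Definition top L b := rev (map (rowp L b 1) (seq 0 L)).
Definition blist L b := bot L b ++ top L b.
Definition bcycle L b := blist L b ++ [rowp L b 0 0].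

Lemma walk_map_seq (f : nat -> pt) : (forall i, adj (f i) (f (S i))) ->
  forall k a, is_walk (map f (seq a k)).
Proof.
  intros Hf k; induction k as [|k IH]; intros a; simpl; [exact I|].
  destruct k as [|k]; simpl; [exact I|].
  split; [apply Hf|]. specialize (IH (S a)). simpl in IH. exact IH.
Qed.

Lemma last_rev {A} (l : list A) d : l <> [] -> last (rev l) d = hd d l.
Proof. destruct l as [|a l]; [congruence|]. intros _. simpl. apply last_app1. Qed.

Lemma divq m q r : (0 <= r < m)%Z -> ((m * q + r) / m = q)%Z.
Proof. intros H. symmetry. apply Z.div_unique with r; auto; lia. Qed.

Lemma key_blist L b p : (0 < L)%nat -> In p (blist L b) -> key L p = b.
Proof.
  intros HL Hp. unfold blist, bot, top in Hp. rewrite in_app_iff, <- in_rev, !in_map_iff in Hp.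
  destruct b as [b1 b2]; unfold key, rowp in *; cbn [fst snd] in *.
  destruct Hp as [[u [<- Hu]]|[u [<- Hu]]]; apply in_seq in Hu; cbn [fst snd];
  f_equal; apply divq; lia.
Qed.

Lemma blist_key L b p : (0 < L)%nat -> key L p = b -> In p (blist L b).
Proof.
  intros HL Hk. destruct p as [p1 p2]. unfold key in Hk. simpl in Hk. subst b.
  unfold blist, bot, top. rewrite in_app_iff, <- in_rev, !in_map_iff.
  assert (HLz : (0 < Z.of_nat L)%Z) by lia.
  pose proof (Z.div_mod p1 (Z.of_nat L) ltac:(lia)) as E1.
  pose proof (Z.mod_pos_bound p1 (Z.of_nat L) HLz) as B1.
  pose proof (Z.div_mod p2 2 ltac:(lia)) as E2.
  pose proof (Z.mod_pos_bound p2 2 ltac:(lia)) as B2.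
  assert (Hu : In (Z.to_nat (p1 mod Z.of_nat L)) (seq 0 L)) by (apply in_seq; lia).
  assert (E : (p2 mod 2 = 0 \/ p2 mod 2 = 1)%Z) by lia.
  destruct E as [E|E]; [left|right]; exists (Z.to_nat (p1 mod Z.of_nat L)); split; auto;
  unfold rowp; cbn [fst snd]; f_equal; lia.
Qed.

Lemma blist_length L b : length (blist L b) = (2 * L)%nat.
Proof. unfold blist, bot, top. rewrite length_app, length_rev, !length_map, length_seq. lia. Qed.

Lemma blist_NoDup L b : NoDup (blist L b).
Proof.
  unfold blist, bot, top. apply NoDup_app.
  - apply NoDup_map_NoDup_ForallPairs; [|apply seq_NoDup].
    intros u v _ _ H. unfold rowp in H. injection H. lia.
  - apply NoDup_rev. apply NoDup_map_NoDup_ForallPairs; [|apply seq_NoDup].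
    intros u v _ _ H. unfold rowp in H. injection H. lia.
  - intros a Ha Hb. rewrite <- in_rev in Hb. rewrite in_map_iff in Ha, Hb.
    destruct Ha as [u [<- _]], Hb as [v [E _]]. unfold rowp in E. injection E. lia.
Qed.

Lemma bcycle_props L b : (0 < L)%nat ->
  exists C, bcycle L b = rowp L b 0 0 :: C /\ is_walk (bcycle L b) /\
    last (bcycle L b) (rowp L b 0 0) = rowp L b 0 0 /\ length C = (2 * L)%nat /\
    (forall p, In p (bcycle L b) <-> In p (blist L b)).
Proof.
  intros HL. destruct L as [|L']; [lia|].
  assert (Hbot : bot (S L') b = rowp (S L') b 0 0 :: map (rowp (S L') b 0) (seq 1 L'))
    by reflexivity.
  exists (map (rowp (S L') b 0) (seq 1 L') ++ top (S L') b ++ [rowp (S L') b 0 0]).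
  split; [|split; [|split; [|split]]].
  - unfold bcycle, blist. rewrite Hbot. simpl. rewrite app_assoc. reflexivity.
  - unfold bcycle, blist. rewrite <- app_assoc.
    assert (Htop : top (S L') b = rowp (S L') b 1 L' :: rev (map (rowp (S L') b 1) (seq 0 L'))).
    { unfold top. rewrite seq_S, map_app, rev_app_distr. reflexivity. }
    apply walk_app with (d := (0,0)%Z).
    + unfold bot. simpl. discriminate.
    + rewrite Htop. discriminate.
    + apply walk_map_seq. intros i. unfold adj, rowp; simpl. lia.
    + apply walk_app with (d := (0,0)%Z).
      * rewrite Htop; discriminate.
      * discriminate.
      * unfold top. apply walk_rev. apply walk_map_seq. intros i. unfold adj, rowp; simpl. lia.
      * exact I.
      * unfold top. rewrite last_rev by (simpl; discriminate). simpl. unfold adj, rowp; simpl. lia.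
    + rewrite Htop. unfold bot. rewrite seq_S, map_app. cbn [map]. rewrite last_app1. simpl.
      unfold adj, rowp; simpl. lia.
  - unfold bcycle. apply last_app1.
  - rewrite !length_app, length_map, length_seq. unfold top. rewrite length_rev, length_map, length_seq.
    simpl. lia.
  - intros p. unfold bcycle. rewrite in_app_iff. simpl. split; [|tauto].
    intros [H|[H|[]]]; auto; subst p; unfold blist; rewrite Hbot; simpl; auto.
Qed.

Lemma div_between m a c e : (0 < m)%Z -> ((a <= c <= e) \/ (e <= c <= a))%Z ->
  (a / m = e / m)%Z -> (c / m = a / m)%Z.
Proof.
  intros Hm Hb He. destruct Hb as [[H1 H2]|[H1 H2]].
  - pose proof (Z.div_le_mono a c m Hm H1). pose proof (Z.div_le_mono c e m Hm H2). lia.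
  - pose proof (Z.div_le_mono e c m Hm H1). pose proof (Z.div_le_mono c a m Hm H2). lia.
Qed.

Lemma in_ib y V : In y (inner_boundary V) <->
  In y V /\ existsb (fun y0 => negb (memb y0 V)) (neighbours y) = true.
Proof. unfold inner_boundary. apply filter_In. Qed.

Lemma bnd_exists V L z : (0 < L)%nat -> ~ In z V -> forall n v,
  (Z.abs (fst v - fst z) + Z.abs (snd v - snd z) < Z.of_nat n)%Z ->
  In v V -> key L v = key L z ->
  exists y, In y (inner_boundary V) /\ key L y = key L v.
Proof.
  intros HL Hz n; induction n as [|n IH]; intros v Hd Hv Hk; [lia|].
  destruct (existsb (fun y0 => negb (memb y0 V)) (neighbours v)) eqn:E.
  { exists v; split; auto. apply in_ib; auto. }
  assert (Hall : forall y, In y (neighbours v) -> In y V).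
  { intros y Hy. apply memb_In. destruct (memb y V) eqn:Ey; auto.
    assert (existsb (fun y0 => negb (memb y0 V)) (neighbours v) = true); [|congruence].
    apply existsb_exists. exists y. rewrite Ey. auto. }
  destruct v as [v1 v2], z as [z1 z2]. unfold key in Hk |- *. cbn [fst snd] in *.
  injection Hk as Hk1 Hk2.
  assert (HLz : (0 < Z.of_nat L)%Z) by lia.
  assert (Hstep : forall w, In w (neighbours (v1, v2)) ->
     ((v1 <= fst w <= z1 \/ z1 <= fst w <= v1) /\ (v2 <= snd w <= z2 \/ z2 <= snd w <= v2))%Z ->
     (Z.abs (fst w - z1) + Z.abs (snd w - z2) < Z.of_nat n)%Z ->
     exists y, In y (inner_boundary V) /\ key L y = (v1 / Z.of_nat L, v2 / 2)%Z).
  { intros w Hw [Hb1 Hb2] Hdw.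
    destruct (IH w Hdw (Hall w Hw)) as [y [Hy Hky]].
    - unfold key. destruct w as [w1 w2]; cbn [fst snd] in *. f_equal.
      + rewrite (div_between _ v1 w1 z1); auto.
      + rewrite (div_between _ v2 w2 z2); auto; lia.
    - exists y; split; auto. rewrite Hky. unfold key. destruct w as [w1 w2]; cbn [fst snd] in *. f_equal.
      + apply (div_between _ v1 w1 z1); auto.
      + apply (div_between _ v2 w2 z2); auto; lia. }
  unfold neighbours in Hstep; cbn [fst snd] in Hstep.
  destruct (Z.lt_trichotomy v1 z1) as [H1|[H1|H1]].
  - apply (Hstep (v1 + 1, v2)%Z); simpl; auto; lia.
  - destruct (Z.lt_trichotomy v2 z2) as [H2|[H2|H2]].
    + apply (Hstep (v1, v2 + 1)%Z); simpl; auto; lia.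
    + subst. contradiction.
    + apply (Hstep (v1, v2 - 1)%Z); simpl; auto; lia.
  - apply (Hstep (v1 - 1, v2)%Z); simpl; auto; lia.
Qed.

Definition fullb V L b := forallb (fun p => memb p V) (blist L b).
Definition wt V L v : nat := if fullb V L (key L v) then S L else (2 * L)%nat.
Definition sumw V L W := list_sum (map (fun v => if memb v W then wt V L v else 0%nat) V).



Lemma lsum_le {A} (f g : A -> nat) l : (forall x, In x l -> f x <= g x)%nat ->
  (list_sum (map f l) <= list_sum (map g l))%nat.
Proof.
  induction l as [|a l IH]; intros H; simpl; auto.
  assert (H1 := H a (or_introl eq_refl)).
  assert (IH' := IH (fun x Hx => H x (or_intror Hx))). lia.
Qed.

Lemma lsum_add {A} (f g : A -> nat) l :
  list_sum (map (fun x => f x + g x)%nat l) = (list_sum (map f l) + list_sum (map g l))%nat.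
Proof. induction l as [|a l IH]; simpl; auto. rewrite IH. lia. Qed.

Lemma lsum_ind {A} (P : A -> bool) c l :
  list_sum (map (fun x => if P x then c else 0%nat) l) = (c * length (filter P l))%nat.
Proof. induction l as [|a l IH]; simpl; auto. destruct (P a); simpl; rewrite IH; lia. Qed.

Lemma lsum_const {A} c (l : list A) : list_sum (map (fun _ => c) l) = (c * length l)%nat.
Proof. induction l as [|a l IH]; simpl; auto. rewrite IH. lia. Qed.

Lemma lsum_in {A} (f : A -> nat) l x : In x l -> (f x <= list_sum (map f l))%nat.
Proof. induction l as [|a l IH]; simpl; [tauto|]. intros [->|H]; [lia|]. specialize (IH H). lia. Qed.

Lemma sumw_grow V L W W' D c : (forall p, In p W -> In p W') -> NoDup D -> incl D V ->
  incl D W' -> (forall d, In d D -> ~ In d W) -> (forall d, In d D -> wt V L d = c) ->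
  (sumw V L W + c * length D <= sumw V L W')%nat.
Proof.
  intros HWW HD HDV HDW' Hdis Hc. unfold sumw.
  assert (Hlen : (length D <= length (filter (fun v => memb v D) V))%nat).
  { apply NoDup_incl_length; auto. intros d Hd. apply filter_In. split; auto. apply memb_In; auto. }
  eapply Nat.le_trans; [|apply lsum_le with
     (f := fun v => ((if memb v W then wt V L v else 0) + (if memb v D then c else 0))%nat)].
  - rewrite lsum_add, lsum_ind. nia.
  - intros v Hv. destruct (memb v D) eqn:ED.
    + apply memb_In in ED. assert (~ In v W) by auto.
      assert (memb v W = false) as -> by (apply memb_false; auto).
      assert (memb v W' = true) as -> by (apply memb_In; auto). rewrite Hc; auto.
    + destruct (memb v W) eqn:EW; [|lia].
      assert (memb v W' = true) as -> by (apply memb_In, HWW, memb_In; auto). lia.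
Qed.

Lemma sumw_total V L W : (0 < L)%nat ->
  (sumw V L W <= S L * length V + (L - 1) * length (filter (fun v => negb (fullb V L (key L v))) V))%nat.
Proof.
  intros HL. unfold sumw. rewrite <- lsum_ind, <- lsum_const, <- lsum_add.
  apply lsum_le. intros v _. unfold wt. destruct (memb v W), (fullb V L (key L v)); simpl; lia.
Qed.

Lemma count_fiber L (X Y : list pt) : (forall x, In x X -> exists y, In y Y /\ key L x = key L y) ->
  (length X <= list_sum (map (fun y => length (filter (fun x => pt_eqb (key L x) (key L y)) X)) Y))%nat.
Proof.
  induction X as [|a X IH]; intros H; simpl; [lia|].
  assert (IH' := IH (fun x Hx => H x (or_intror Hx))).
  destruct (H a (or_introl eq_refl)) as [y [Hy Hk]].
  eapply Nat.le_trans; [|apply lsum_le with (f := fun y0 =>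
      ((if pt_eqb (key L a) (key L y0) then 1 else 0) +
       length (filter (fun x => pt_eqb (key L x) (key L y0)) X))%nat)].
  - rewrite lsum_add.
    assert (H1 := lsum_in (fun y0 => if pt_eqb (key L a) (key L y0) then 1%nat else 0%nat) Y y Hy).
    simpl in H1. assert (pt_eqb (key L a) (key L y) = true) as E by (apply pt_eqb_eq; auto).
    rewrite E in H1. lia.
  - intros y0 _. destruct (pt_eqb (key L a) (key L y0)); simpl; lia.
Qed.

Lemma partial_bound V L : (0 < L)%nat -> NoDup V ->
  (length (filter (fun v => negb (fullb V L (key L v))) V) <= 2 * L * length (inner_boundary V))%nat.
Proof.
  intros HL HV. set (X := filter _ V).
  assert (HX : forall x, In x X -> exists y, In y (inner_boundary V) /\ key L x = key L y).
  { intros x Hx. unfold X in Hx. apply filter_In in Hx. destruct Hx as [Hx Hf].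
    unfold fullb in Hf. apply Bool.negb_true_iff in Hf.
    destruct (forallb (fun p => memb p V) (blist L (key L x))) eqn:E; [discriminate|].
    assert (exists z, In z (blist L (key L x)) /\ ~ In z V) as [z [Hz HzV]].
    { apply NNPP. intros Hn. assert (forallb (fun p => memb p V) (blist L (key L x)) = true); [|congruence].
      apply forallb_forall. intros p Hp. apply memb_In. apply NNPP. intros Hp'. apply Hn. eauto. }
    apply key_blist in Hz; auto.
    destruct (bnd_exists V L z HL HzV
      (S (Z.to_nat (Z.abs (fst x - fst z) + Z.abs (snd x - snd z)))) x ltac:(lia) Hx
      ltac:(rewrite Hz; auto)) as [y [Hy Hky]].
    exists y; split; auto. }
  eapply Nat.le_trans; [apply (count_fiber L X _ HX)|].
  rewrite <- (lsum_const (2 * L)%nat (inner_boundary V)).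
  apply lsum_le. intros y _. rewrite <- (blist_length L (key L y)).
  apply NoDup_incl_length.
  - apply NoDup_filter. unfold X. apply NoDup_filter. auto.
  - intros x Hx. apply filter_In in Hx. destruct Hx as [_ Hx]. apply pt_eqb_eq in Hx.
    apply blist_key; auto.
Qed.

Definition BC V L W := forall p, In p W -> fullb V L (key L p) = true -> incl (blist L (key L p)) W.
Definition Inv V L W := W <> [] /\ is_walk W /\ @hd pt (0,0)%Z W = @last pt W (0,0)%Z /\ incl W V /\
  BC V L W /\ (L * walk_length W <= sumw V L W)%nat.

Lemma crossing W q : forall x, is_walk (x :: q) -> In x W -> ~ In (last (x :: q) x) W ->
  exists y z, In y W /\ ~ In z W /\ adj y z /\ In z (x :: q).
Proof.
  induction q as [|a q IH]; intros x Hw Hx Hl; [simpl in Hl; contradiction|].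
  change (last (x :: a :: q) x) with (last (a :: q) x) in Hl. destruct Hw as [Ha Hw].
  destruct (classic (In a W)) as [HaW|HaW].
  - rewrite (last_default a q x a) in Hl.
    destruct (IH a Hw HaW Hl) as [y [z [H1 [H2 [H3 H4]]]]]. exists y, z. split; auto. split; auto. split; auto. right; auto.
  - exists x, a. split; auto. split; auto. split; auto. right; left; auto.
Qed.

Lemma fullb_incl V L b : fullb V L b = true -> incl (blist L b) V.
Proof. unfold fullb. rewrite forallb_forall. intros H p Hp. apply memb_In. auto. Qed.

Lemma step V L W z : (0 < L)%nat -> NoDup V -> connected V -> Inv V L W -> In z V -> ~ In z W ->
  exists W', Inv V L W' /\ (forall p, In p W -> In p W') /\
    exists x, In x V /\ ~ In x W /\ In x W'.
Proof.
  intros HL HV Hc [Hne [Hw [Hhl [Hinc [Hbc Hlen]]]]] Hz HzW.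
  destruct W as [|w0 W0]; [congruence|].
  destruct (Hc w0 z (Hinc w0 (or_introl eq_refl)) Hz) as [q [Hq [Hql Hqi]]].
  destruct (crossing (w0 :: W0) q w0 Hq (or_introl eq_refl) ltac:(rewrite Hql; auto))
    as [y [x [Hy [HxW [Hyx Hxq]]]]].
  assert (HxV : In x V) by auto.
  unfold walk_length in *.
  destruct (fullb V L (key L x)) eqn:Ef.
  - destruct (bcycle_props L (key L x) HL) as [C [EC [HCw [HCl [HCn HCi]]]]].
    rewrite EC in HCw, HCl, HCi.
    assert (HxC : In x (rowp L (key L x) 0 0 :: C)) by (apply HCi, blist_key; auto).
    destruct (rotate C _ x HCw HCl HxC) as [C' [HC'w [HC'l [HC'n HC'i]]]].
    destruct (splice (w0 :: W0) y C' x (0,0)%Z Hw Hy HC'w HC'l Hyx)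
      as [W' [HW'w [HW'h [HW'l [HW'n HW'i]]]]].
    assert (HinW' : forall p, In p (w0 :: W0) -> In p W') by (intros p Hp; apply HW'i; auto).
    assert (HblW' : incl (blist L (key L x)) W').
    { intros p Hp. apply HW'i. right. apply HC'i, HCi. auto. }
    exists W'. split; [|split; auto; exists x; repeat split; auto; apply HW'i; simpl; auto].
    assert (Hgrow := sumw_grow V L (w0 :: W0) W' (blist L (key L x)) (S L) HinW'
        (blist_NoDup L _) (fullb_incl _ _ _ Ef) HblW').
    refine (conj _ (conj HW'w (conj _ (conj _ (conj _ _))))).
    + intros E; rewrite E in HW'n; simpl in HW'n; lia.
    + rewrite HW'h, HW'l. exact Hhl.
    + intros p Hp. apply HW'i in Hp. destruct Hp as [Hp|Hp]; auto.
      apply HC'i, HCi in Hp. apply (fullb_incl _ _ _ Ef). auto.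
    + intros p Hp Hf. apply HW'i in Hp. destruct Hp as [Hp|Hp].
      * intros r Hr. apply HinW'. apply (Hbc p Hp Hf). auto.
      * apply HC'i, HCi in Hp. rewrite (key_blist L _ p HL Hp). auto.
    + assert (Hd : forall d, In d (blist L (key L x)) -> ~ In d (w0 :: W0)).
      { intros d Hd HdW. assert (Hk := key_blist L _ d HL Hd).
        apply HxW. apply (Hbc d HdW); rewrite Hk; auto. apply blist_key; auto. }
      specialize (Hgrow Hd).
      assert (Hwt : forall d, In d (blist L (key L x)) -> wt V L d = S L).
      { intros d Hdd. unfold wt. rewrite (key_blist L _ d HL Hdd), Ef. auto. }
      specialize (Hgrow Hwt). rewrite blist_length in Hgrow. unfold walk_length. rewrite HW'n, HC'n.
      simpl length in *. nia.
  - destruct (splice (w0 :: W0) y [] x (0,0)%Z Hw Hy I eq_refl Hyx)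
      as [W' [HW'w [HW'h [HW'l [HW'n HW'i]]]]].
    assert (HinW' : forall p, In p (w0 :: W0) -> In p W') by (intros p Hp; apply HW'i; auto).
    exists W'. split; [|split; auto; exists x; repeat split; auto; apply HW'i; simpl; auto].
    assert (Hgrow := sumw_grow V L (w0 :: W0) W' [x] (2 * L)%nat HinW'
        ltac:(constructor; [simpl; tauto|constructor]) ltac:(intros p [<-|[]]; auto)
        ltac:(intros p [<-|[]]; apply HW'i; simpl; auto)
        ltac:(intros p [<-|[]]; auto)
        ltac:(intros p [<-|[]]; unfold wt; rewrite Ef; auto)).
    refine (conj _ (conj HW'w (conj _ (conj _ (conj _ _))))).
    + intros E; rewrite E in HW'n; simpl in HW'n; lia.
    + rewrite HW'h, HW'l. exact Hhl.
    + intros p Hp. apply HW'i in Hp. destruct Hp as [Hp|[<-|[]]]; auto.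
    + intros p Hp Hf. apply HW'i in Hp. destruct Hp as [Hp|[<-|[]]].
      * intros r Hr. apply HinW'. apply (Hbc p Hp Hf). auto.
      * congruence.
    + unfold walk_length. rewrite HW'n. simpl length in *. nia.
Qed.

Lemma filter_le {A} (P P' : A -> bool) l : (forall v, P' v = true -> P v = true) ->
  (length (filter P' l) <= length (filter P l))%nat.
Proof.
  intros H. induction l as [|a l IH]; simpl; auto.
  destruct (P' a) eqn:E1; [rewrite (H a E1); simpl; lia|]. destruct (P a); simpl; lia.
Qed.

Lemma filter_lt {A} (P P' : A -> bool) l x : (forall v, P' v = true -> P v = true) ->
  In x l -> P x = true -> P' x = false -> (length (filter P' l) < length (filter P l))%nat.
Proof.
  intros H. induction l as [|a l IH]; simpl; [tauto|].
  intros [<-|Hx] Hp Hp'.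
  - rewrite Hp, Hp'. simpl. pose proof (filter_le P P' l H). lia.
  - specialize (IH Hx Hp Hp'). destruct (P' a) eqn:E1; [rewrite (H a E1); simpl; lia|].
    destruct (P a); simpl; lia.
Qed.

Lemma loop V L : (0 < L)%nat -> NoDup V -> connected V -> forall k W,
  (length (filter (fun v => negb (memb v W)) V) <= k)%nat -> Inv V L W ->
  exists W', Inv V L W' /\ incl V W'.
Proof.
  intros HL HV Hc k; induction k as [|k IH]; intros W Hk HW.
  - exists W; split; auto. intros v Hv. apply NNPP; intros Hn.
    assert (In v (filter (fun v => negb (memb v W)) V)).
    { apply filter_In. split; auto. apply Bool.negb_true_iff, memb_false; auto. }
    destruct (filter _ V); simpl in *; [tauto|lia].
  - destruct (classic (incl V W)) as [Hi|Hi]; [exists W; auto|].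
    assert (exists z, In z V /\ ~ In z W) as [z [Hz HzW]].
    { apply NNPP; intros Hn; apply Hi; intros v Hv; apply NNPP; intros Hv'; apply Hn; eauto. }
    destruct (step V L W z HL HV Hc HW Hz HzW) as [W' [HW' [Hsub [x [HxV [HxW HxW']]]]]].
    apply (IH W'); auto.
    assert (length (filter (fun v => negb (memb v W')) V) < length (filter (fun v => negb (memb v W)) V))%nat;
      [|lia].
    apply filter_lt with x; auto.
    + intros v. rewrite !Bool.negb_true_iff, !memb_false. auto.
    + apply Bool.negb_true_iff, memb_false; auto.
    + apply Bool.negb_false_iff, memb_In; auto.
Qed.

Lemma comb V L : (0 < L)%nat -> NoDup V -> V <> [] -> connected V ->
  exists p, p <> [] /\ is_walk p /\ visits p V /\
   (L * walk_length p <= S L * length V + (L - 1) * (2 * L * length (inner_boundary V)))%nat.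
Proof.
  intros HL HV Hne Hc.
  assert (HW0 : exists W, Inv V L W).
  { destruct V as [|v0 V0]; [congruence|].
    destruct (fullb (v0 :: V0) L (key L v0)) eqn:Ef.
    - destruct (bcycle_props L (key L v0) HL) as [C [EC [HCw [HCl [HCn HCi]]]]].
      exists (bcycle L (key L v0)).
      assert (Hsub : incl (bcycle L (key L v0)) (v0 :: V0)).
      { intros p Hp. apply HCi in Hp. apply (fullb_incl _ _ _ Ef). auto. }
      assert (Hgrow := sumw_grow (v0 :: V0) L [] (bcycle L (key L v0)) (blist L (key L v0)) (S L)
        ltac:(intros p []) (blist_NoDup L _) (fullb_incl _ _ _ Ef)
        ltac:(intros p Hp; apply HCi; auto) ltac:(intros p _ [])
        ltac:(intros d Hdd; unfold wt; rewrite (key_blist L _ d HL Hdd), Ef; auto)).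
      rewrite blist_length in Hgrow.
      refine (conj _ (conj HCw (conj _ (conj Hsub (conj _ _))))).
      + rewrite EC; discriminate.
      + rewrite EC at 1. simpl hd. rewrite EC in HCl |- *. rewrite (last_default _ _ _ (rowp L (key L v0) 0 0)).
        auto.
      + intros p Hp Hf. apply HCi in Hp. rewrite (key_blist L _ p HL Hp).
        intros r Hr; apply HCi; auto.
      + unfold walk_length. rewrite EC at 1. simpl length. rewrite HCn. nia.
    - exists [v0]. refine (conj _ (conj I (conj eq_refl (conj _ (conj _ _))))).
      + discriminate.
      + intros p [<-|[]]; simpl; auto.
      + intros p [<-|[]] Hf; congruence.
      + unfold walk_length; simpl. lia. }
  destruct HW0 as [W HW].
  destruct (loop V L HL HV Hc _ W (le_n _) HW) as [W' [[Hne' [Hw' [_ [_ [_ Hl']]]]] Hi']].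
  exists W'. split; auto. split; auto. split; auto.
  pose proof (sumw_total V L W' HL). pose proof (partial_bound V L HL HV). nia.
Qed.

Lemma ell_le V p : p <> [] -> is_walk p -> visits p V -> (ell_TS V <= walk_length p)%nat.
Proof.
  intros Hp Hw Hv.
  set (P := fun n => exists q, q <> [] /\ is_walk q /\ visits q V /\ walk_length q = n).
  destruct (dec_inh_nat_subset_has_unique_least_element P (fun n => classic (P n))
     (ex_intro _ (walk_length p) (ex_intro _ p (conj Hp (conj Hw (conj Hv eq_refl))))))
    as [m [[Hm Hmin] _]].
  assert (Hex : exists n, is_ell_TS V n).
  { exists m. split; [exact Hm|]. intros q Hq Hqw Hqv. apply Hmin. exists q. auto. }
  pose proof (epsilon_spec (inhabits 0%nat) (is_ell_TS V) Hex) as [_ H].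
  apply H; auto.
Qed.

Lemma filter_length_le' {A} (f : A -> bool) l : (length (filter f l) <= length l)%nat.
Proof. induction l as [|a l IH]; simpl; auto. destruct (f a); simpl; lia. Qed.

Open Scope R_scope.

Theorem lemma2p1 (V : list pt) :
  NoDup V -> V <> nil -> connected V ->
  INR (ell_TS V) <=
  INR (length V) *
    (1 + 8 * Rpower (INR (length (inner_boundary V)) / INR (length V)) (1 / 3)).
Proof.
  intros HV Hne Hc.
  set (n := length V). set (b := length (inner_boundary V)).
  assert (Hn : (0 < n)%nat) by (unfold n; destruct V; [congruence|simpl; lia]).
  assert (Hbn : (b <= n)%nat) by apply filter_length_le'.
  set (s := Rpower (INR b / INR n) (1 / 3)).
  assert (HN : 0 < INR n) by (apply lt_0_INR; auto).
  assert (Hs0 : 0 < s) by (unfold s, Rpower; apply exp_pos).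
  destruct (Rle_lt_dec (1/8) s) as [Hs|Hs].
  - destruct (comb V 1 ltac:(lia) HV Hne Hc) as [p [Hp [Hw [Hv Hl]]]].
    pose proof (ell_le V p Hp Hw Hv) as He.
    assert (Hle : (ell_TS V <= 2 * n)%nat) by (fold n in Hl; lia).
    apply le_INR in Hle. rewrite mult_INR in Hle. simpl (INR 2) in Hle.
    fold n b s. nra.
  - assert (Hb : (0 < b)%nat).
    { destruct b as [|b']; [|lia]. exfalso. unfold s, Rpower in Hs.
      replace (INR 0 / INR n) with 0 in Hs by (simpl; field; lra).
      unfold ln in Hs. destruct (Rlt_dec 0 0); [lra|]. rewrite Rmult_0_r, exp_0 in Hs. lra. }
    assert (HB : 0 < INR b) by (apply lt_0_INR; auto).
    assert (Hs3 : s * s * s = INR b / INR n).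
    { unfold s, Rpower. rewrite <- !exp_plus.
      replace (1 / 3 * ln (INR b / INR n) + 1 / 3 * ln (INR b / INR n) + 1 / 3 * ln (INR b / INR n))
        with (ln (INR b / INR n)) by field.
      apply exp_ln. apply Rdiv_lt_0_compat; auto. }
    set (r := / (4 * s)).
    destruct (archimed r) as [Hu1 Hu2].
    assert (Hr : 2 < r) by (unfold r; apply (Rmult_lt_reg_l (4 * s)); [lra|]; field_simplify; lra).
    assert (Hz : (0 < up r)%Z) by (apply lt_IZR; lra).
    set (L := Z.to_nat (up r)).
    assert (HLr : INR L = IZR (up r)) by (unfold L; rewrite INR_IZR_INZ, Z2Nat.id; [reflexivity|lia]).
    rewrite <- HLr in Hu1, Hu2.
    assert (H4r : 4 * s * r = 1) by (unfold r; field; lra).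
    assert (HL : (0 < L)%nat) by (unfold L; lia).
    destruct (comb V L HL HV Hne Hc) as [p [Hp [Hw [Hv Hl]]]].
    pose proof (ell_le V p Hp Hw Hv) as He.
    fold n b in Hl.
    assert (Hle : (L * ell_TS V <= S L * n + 2 * L * L * b)%nat) by nia.
    apply le_INR in Hle. rewrite !plus_INR, !mult_INR, S_INR in Hle. simpl (INR 2) in Hle.
    fold n b s.
    set (l := INR L) in *. set (e := INR (ell_TS V)) in *. set (N := INR n) in *. set (B := INR b) in *.
    assert (HB' : B = s * s * s * N) by (rewrite Hs3; field; lra).
    assert (Hl1 : 1 <= 4 * s * l) by nra.
    assert (Hl2 : 4 * s * l <= 1 + 4 * s) by nra.
    assert (Hlpos : 0 < l) by lra.
    assert (Hsl : s * l < 1) by lra.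
    assert (Hsl2 : s * l * s < 1) by nra.
    assert (Hkey : l * e <= l * (N * (1 + 8 * s))).
    { eapply Rle_trans; [exact Hle|]. rewrite HB'.
      assert (N <= 4 * s * l * N) by nra.
      assert (2 * l * l * (s * s * s * N) <= 4 * s * l * N).
      { assert (2 * (s * l * s) * (s * l * N) <= 2 * (s * l * N)).
        { assert (0 <= s * l * N) by nra. nra. }
        nra. }
      nra. }
    apply Rmult_le_reg_l with l; auto.
Qed.
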